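(* Let $(X,\omega_X)$ and $(Y,\omega_Y)$ be symplectic finite $\mathbb Z$-modules of the same type and consider $X\oplus Y$ with the symplectic form $\omega_X+\omega_Y$. Then the set of graphs $\{(x,f(x)):x\in X\}$ of antisymplectic maps $f\colon X\to Y$ equals the set of maximal isotropic subgroups $Z\subset X\oplus Y$ with $Z\cap(X\oplus 0)=Z\cap(0\oplus Y)=\{0\}$. In particular, any two such maximal isotropic subgroups $Z_1,Z_2$ are equivalent under the symplectic groups: there is $s\in\mathrm{Sp}(X,\mathbb Z)$ with $(s\times\mathrm{id}_Y)(Z_1)=Z_2$ (and likewise there is $t\in\mathrm{Sp}(Y,\mathbb Z)$ with $(\mathrm{id}_X\times t)(Z_1)=Z_2$).
   Context: A finite $\mathbb Z$-module of the form $(\mathbb Z_{d_1}\times\dots\times\mathbb Z_{d_k})^2$ with $1<d_1\mid\dots\mid d_k$ is called symplectic when equipped with the image of a symplectic form on $\mathbb Z^k\times\mathbb Z^k$ (an alternating, bilinear, nondegenerate form). Same type means isomorphic as abelian groups. $\mathrm{Sp}(X,\mathbb Z)$ is the group of form-preserving automorphisms. A $\mathbb Z$-linear map $f\colon X\to Y$ is antisymplectic if $\omega_X(x,y)=-\omega_Y(f(x),f(y))$ for all $x,y$. A subgroup is isotropic if the form vanishes on it. *)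

(* Defs.v *)
From HB Require Import structures.
From mathcomp Require Import all_boot all_order all_algebra.
Set Implicit Arguments. Unset Strict Implicit. Unset Printing Implicit Defensive.
Import GRing.Theory.
Local Open Scope ring_scope.

(* Forms take values in 'Z_n, which we view as the subgroup (1/n)Z/Z of Q/Z.
   Every Q/Z-valued bilinear form on a finite abelian group of exponent e
   factors through (1/e)Z/Z = 'Z_e, so quantifying over n and 'Z_n-valued
   forms is the same as quantifying over Q/Z-valued forms. *)

Definition biadditive (V : zmodType) (n : nat) (w : V -> V -> 'Z_n) : Prop :=
  (forall x, {morph w x : a b / a + b}) /\
  (forall y, {morph w ^~ y : a b / a + b}).

Definition alternating (V : zmodType) (n : nat) (w : V -> V -> 'Z_n) : Prop :=
  forall x, w x x = 0.

Definition nondegenerate (V : zmodType) (n : nat) (w : V -> V -> 'Z_n) : Prop :=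
  forall x, (forall y, w x y = 0) -> x = 0.

Definition symplectic (V : finZmodType) (n : nat) (w : V -> V -> 'Z_n) : Prop :=
  [/\ biadditive w, alternating w & nondegenerate w].

Definition additive_map (U V : zmodType) (f : U -> V) : Prop :=
  {morph f : a b / a + b}.

Definition same_type (X Y : finZmodType) : Prop :=
  exists f : X -> Y, additive_map f /\ bijective f.

Definition in_Sp (X : finZmodType) (n : nat) (w : X -> X -> 'Z_n) (s : X -> X) :=
  [/\ additive_map s, bijective s & forall x y, w (s x) (s y) = w x y].

Definition antisymplectic (X Y : finZmodType) (n : nat)
  (wX : X -> X -> 'Z_n) (wY : Y -> Y -> 'Z_n) (f : X -> Y) : Prop :=
  additive_map f /\ forall x y, wX x y = - wY (f x) (f y).

Definition sum_form (X Y : finZmodType) (n : nat)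
  (wX : X -> X -> 'Z_n) (wY : Y -> Y -> 'Z_n) (u v : X * Y) : 'Z_n :=
  wX u.1 v.1 + wY u.2 v.2.

Definition is_subgroup (X Y : finZmodType) (Z : {set X * Y}) : Prop :=
  (0 : X * Y) \in Z /\ forall a b : X * Y, a \in Z -> b \in Z -> a - b \in Z.

Definition isotropic (X Y : finZmodType) (n : nat)
  (w : X * Y -> X * Y -> 'Z_n) (Z : {set X * Y}) : Prop :=
  forall a b, a \in Z -> b \in Z -> w a b = 0.

Definition max_isotropic (X Y : finZmodType) (n : nat)
  (w : X * Y -> X * Y -> 'Z_n) (Z : {set X * Y}) : Prop :=
  [/\ is_subgroup Z, isotropic w Z &
     forall Z' : {set X * Y}, is_subgroup Z' -> isotropic w Z' ->
       Z \subset Z' -> Z' = Z].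

Definition graph (X Y : finType) (f : X -> Y) : {set X * Y} :=
  [set (x, f x) | x : X].

Definition left_summand (X Y : finZmodType) : {set X * Y} :=
  [set u : X * Y | u.2 == 0].
Definition right_summand (X Y : finZmodType) : {set X * Y} :=
  [set u : X * Y | u.1 == 0].

Definition transversal_lagrangian (X Y : finZmodType) (n : nat)
  (wX : X -> X -> 'Z_n) (wY : Y -> Y -> 'Z_n) (Z : {set X * Y}) : Prop :=
  [/\ max_isotropic (sum_form wX wY) Z,
      Z :&: left_summand X Y = [set (0 : X * Y)] &
      Z :&: right_summand X Y = [set (0 : X * Y)]].

(* Main.v *)
Require Import Defs.
From HB Require Import structures.
From mathcomp Require Import all_boot all_order all_algebra.
From mathcomp Require Import zify.
Set Implicit Arguments. Unset Strict Implicit. Unset Printing Implicit Defensive.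
Import GRing.Theory.
Local Open Scope ring_scope.

Lemma kerZ (n m : nat) : (0 < m)%N -> (#|[set z : 'Z_n | z *+ m == 0%R]| <= m)%N.
Proof.
move=> m0.
set N := (Zp_trunc n).+2.
have val_mul (z : 'Z_n) : val (z *+ m) = ((val z * m) %% N)%N.
  by rewrite Zp_mulrn.
pose h (z : 'Z_n) : 'I_m.-1.+1 := inord ((val z * m) %/ N).
have bnd (u : 'Z_n) : ((val u * m) %/ N < m.-1.+1)%N.
  by rewrite prednK // ltn_divLR // mulnC ltn_pmul2l // ltn_ord.
have key (u : 'Z_n) : u \in [set y : 'Z_n | y *+ m == 0%R] -> (val u * m = (h u) * N)%N.
  rewrite inE => /eqP/(congr1 val); rewrite val_mul /= => hz.
  by rewrite /h inordK // {1}(divn_eq (val u * m) N) hz addn0.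
apply: leq_trans (_ : #|'I_m.-1.+1| <= m)%N; last by rewrite card_ord prednK.
apply: (@leq_card_in _ _ h).
move=> z1 z2 h1 h2 e; apply: val_inj.
have := key _ h1; rewrite e -(key _ h2) => /eqP; rewrite eqn_pmul2r // => /eqP.
done.
Qed.

Section Add.
Variables (U W : zmodType) (f : U -> W).
Hypothesis hf : {morph f : a b / a + b}.
Lemma ad0 : f 0 = 0.
Proof. by apply: (addrI (f 0)); rewrite -hf !addr0. Qed.
Lemma adN a : f (- a) = - f a.
Proof. by apply: (addrI (f a)); rewrite -hf !subrr ad0. Qed.
Lemma adB a b : f (a - b) = f a - f b.
Proof. by rewrite hf adN. Qed.
Lemma adMn a k : f (a *+ k) = f a *+ k.
Proof. by elim: k => [|k IH]; rewrite ?ad0 // !mulrS hf IH. Qed.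
End Add.

Section Grp.
Variable V : finZmodType.
Definition subg (S : {set V}) := (0 : V) \in S /\ forall a b, a \in S -> b \in S -> a - b \in S.

Lemma subgD (S : {set V}) a b : subg S -> a \in S -> b \in S -> a + b \in S.
Proof. by case=> h0 hB ha hb; rewrite -[b]opprK -[- b]sub0r hB // hB. Qed.
Lemma subgN (S : {set V}) a : subg S -> a \in S -> - a \in S.
Proof. by case=> h0 hB ha; rewrite -sub0r hB. Qed.
Lemma subgMn (S : {set V}) a k : subg S -> a \in S -> a *+ k \in S.
Proof. by move=> hS ha; elim: k => [|k IH]; [case: hS|rewrite mulrS subgD]. Qed.

Lemma subgI (S : {set V}) : (0 : V) \in S -> (forall a b, a \in S -> b \in S -> a + b \in S) ->
  (forall a, a \in S -> - a \in S) -> subg S.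
Proof. by move=> h0 hD hN; split=> // a b ha hb; rewrite hD ?hN. Qed.

Lemma exord (g : V) : exists k, (0 < k)%N && (g *+ k == 0).
Proof.
have: ~~ injectiveb (fun i : 'I_#|V|.+1 => g *+ i).
  apply/negP => /injectiveP inj; have := leq_card _ inj.
  by rewrite card_ord; set a := #|_|; rewrite ltnn.
case/injectivePn => i [j ne e].
have ex2 (a b : nat) : (a < b)%N -> g *+ a = g *+ b -> exists k, (0 < k)%N && (g *+ k == 0).
  move=> ab eab; exists (b - a)%N; rewrite subn_gt0 ab andTb mulrnBr; last exact: ltnW.
  rewrite eab subrr; exact: eqxx.
case: (ltngtP i j) => [ij|ji|ij]; first exact: ex2 ij e.
  exact: ex2 ji (esym e).
by move: ne; rewrite (val_inj ij) eqxx.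
Qed.

Section Ext.
Variables (M : {set V}) (g : V).
Definition Pk k := (0 < k)%N && ((g *+ k == 0) || (g *+ k \in M)).
Lemma exP : exists k, Pk k.
Proof. by case: (exord g) => k /andP[k0 /eqP e]; exists k; rewrite /Pk k0 e eqxx. Qed.
Definition m0 := ex_minn exP.
Definition ext := [set p.2 + g *+ p.1 | p : 'I_m0 * V in setX [set: 'I_m0] M].

Hypothesis hM : subg M.
Lemma m0P : [/\ (0 < m0)%N, g *+ m0 \in M &
   forall k, (0 < k)%N -> g *+ k \in M -> (m0 <= k)%N].
Proof.
rewrite /m0; case: ex_minnP => m /andP[m_gt0 hm] mn; split=> //.
  by case/orP: hm => // /eqP ->; case: hM.
by move=> k k0 hk; apply: mn; rewrite /Pk k0 hk orbT.
Qed.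

Lemma memext m k : m \in M -> m + g *+ k \in ext.
Proof.
case: m0P => mpos gm _ hm.
rewrite (divn_eq k m0) mulrnDr addrA.
apply/imsetP; exists (Ordinal (ltn_pmod k mpos), m + g *+ (k %/ m0 * m0)) => //.
by rewrite !inE /= mulnC mulrnA subgD // subgMn.
Qed.

Lemma extP x : x \in ext -> exists m k, m \in M /\ x = m + g *+ k.
Proof. by case/imsetP => -[j m]; rewrite !inE /= => hm ->; exists m, j. Qed.

Lemma ext_subg : subg ext.
Proof.
case: m0P => mpos gm _.
apply: subgI.
- by rewrite -[0]addr0 -(mulr0n g) memext //; case: hM.
- move=> a b /extP[m [k [hm ->]]] /extP[m' [k' [hm' ->]]].
  by rewrite addrACA -mulrnDr memext // subgD.
- move=> a /extP[m [k [hm ->]]].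
  have e : - (g *+ k) = - (g *+ m0 *+ k) + g *+ (m0 * k - k).
    by rewrite mulrnBr ?leq_pmull // -mulrnA addrA addNr add0r.
  by rewrite opprD e addrA memext // subgD ?subgN // subgMn.
Qed.

Lemma subext : M \subset ext.
Proof. by apply/subsetP=> m hm; rewrite -[m]addr0 -(mulr0n g) memext. Qed.

Lemma gext : g \in ext.
Proof. by rewrite -[g]add0r -[g in _ + g]mulr1n memext //; case: hM. Qed.

Lemma card_ext : #|ext| = (m0 * #|M|)%N.
Proof.
case: m0P => mpos gm mmin.
rewrite card_in_imset ?cardsX ?cardsT ?card_ord //.
move=> [i m] [j m']; rewrite !inE !andTb => hm hm' e.
change (is_true (m \in M)) in hm; change (is_true (m' \in M)) in hm'; change (m + g *+ i = m' + g *+ j) in e.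
have key (a b : 'I_m0) (u u' : V) : u \in M -> u' \in M -> (a <= b)%N ->
   u + g *+ a = u' + g *+ b -> a = b.
  move=> hu hu' ab eab; apply/val_inj/eqP; rewrite eqn_leq ab /=.
  apply/negP => /negP; rewrite -ltnNge => ab'.
  have : g *+ (b - a) \in M.
    rewrite mulrnBr // -[g *+ b](addKr u') -eab.
    by rewrite addrA addrK addrC; case: hM => _; apply.
  have bpos : (0 < b - a)%N by rewrite subn_gt0.
  move/(mmin _ bpos) => h.
  by have := leq_ltn_trans (leq_subr a b) (ltn_ord b); rewrite ltnNge h.
have ij : i = j.
  case: (leqP i j) => h; first exact: key e.
  by apply/esym; apply: key (esym e) => //; apply: ltnW.
by move: e; rewrite ij => /addIr ->.
Qed.
End Ext.
End Grp.

Section Homs.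
Variables (V : finZmodType) (n : nat).
Definition homs (S : {set V}) : {set {ffun V -> 'Z_n}} :=
  [set f : {ffun V -> 'Z_n} | [forall x, (x \notin S) ==> (f x == 0)] &&
           [forall x in S, forall y in S, f (x + y) == f x + f y]].

Lemma homsP (S : {set V}) (f : {ffun V -> 'Z_n}) : reflect ((forall x, x \notin S -> f x = 0) /\
   (forall x y, x \in S -> y \in S -> f (x + y) = f x + f y)) (f \in homs S).
Proof.
rewrite inE; apply: (iffP andP) => [[/forallP h1 /forallP h2]|[h1 h2]]; split.
- by move=> x hx; apply/eqP; have := h1 x; rewrite hx.
- by move=> x y hx hy; have /forall_inP/(_ y hy)/eqP := (implyP (h2 x) hx).
- by apply/forallP => x; apply/implyP => /h1 ->.
- by apply/forall_inP => x hx; apply/forall_inP => y hy; rewrite h2.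
Qed.

Lemma homs0 (S : {set V}) (f : {ffun V -> 'Z_n}) : (0 : V) \in S -> f \in homs S -> f 0 = 0.
Proof.
move=> h0 /homsP[_ h]; apply: (addrI (f 0)); by rewrite -h // !addr0.
Qed.

Lemma homsMn (S : {set V}) (f : {ffun V -> 'Z_n}) g k : subg S -> f \in homs S -> g \in S ->
  f (g *+ k) = f g *+ k.
Proof.
move=> hS hf hg; elim: k => [|k IH]; first by rewrite !mulr0n (homs0 (S := S)) //; case: hS.
by case/homsP: hf => _ h; rewrite !mulrS h ?IH // subgMn.
Qed.

Lemma step (M : {set V}) g : subg M ->
  (#|homs (ext M g)| <= m0 M g * #|homs M|)%N.
Proof.
move=> hM.
set E := ext M g; set m := m0 M g.
have [mpos gm mmin] := m0P g hM.
have hE : subg E := ext_subg g hM.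
have sME : M \subset E := subext g hM.
have gE : g \in E := gext g hM.
pose r (f : {ffun V -> 'Z_n}) : {ffun V -> 'Z_n} := [ffun x => if x \in M then f x else 0].
pose z0 (psi : {ffun V -> 'Z_n}) := odflt 0 [pick z : 'Z_n | z *+ m == psi (g *+ m)].
pose F f := (r f, f g - z0 (r f)).
have Finj : {in homs E &, injective F}.
  move=> f1 f2 h1 h2 e; have er : r f1 = r f2 := congr1 fst e.
  have ez : f1 g - z0 (r f1) = f2 g - z0 (r f2) := congr1 snd e.
  rewrite er in ez; have eg : f1 g = f2 g by apply: (addIr (- z0 (r f2))); exact: ez.
  apply/ffunP => x; case: (boolP (x \in E)) => hx; last first.
    by case/homsP: h1 => -> //; case/homsP: h2 => -> //.
  case/extP: hx => u [k [hu ->]].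
  have hu' : u \in E by apply: (subsetP sME).
  have gk : g *+ k \in E by apply: subgMn.
  case/homsP: (h1) => _ a1; case/homsP: (h2) => _ a2.
  rewrite (a1 _ _ hu' gk) (a2 _ _ hu' gk) (homsMn k hE h1 gE) (homsMn k hE h2 gE) eg.
  by have := congr1 (fun h : {ffun V -> 'Z_n} => h u) er; rewrite !ffunE hu => ->.
have FS : F @: homs E \subset setX (homs M) [set z : 'Z_n | z *+ m == 0%R].
  apply/subsetP => _ /imsetP[f hf ->]; rewrite in_setX.
  case/homsP: (hf) => hf1 hf2.
  apply/andP; split.
    apply/homsP; split=> [x hx|x y hx hy]; first by rewrite ffunE (negbTE hx).
    have hxE := subsetP sME x hx; have hyE := subsetP sME y hy.
    by rewrite !ffunE hx hy (subgD hM hx hy) (hf2 x y hxE hyE).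
  rewrite inE /z0; case: pickP => [z /eqP hz|H]; last first.
    by have := H (f g); rewrite ffunE gm (homsMn m hE hf gE) eqxx.
  change ((f g - z) *+ m == 0); rewrite mulrnBl hz ffunE gm (homsMn m hE hf gE) subrr.
  exact: eqxx.
rewrite -(card_in_imset Finj).
apply: leq_trans (subset_leq_card FS) _.
rewrite cardsX mulnC leq_mul2r (kerZ n mpos) orbT //.
Qed.

Lemma homs_card (A : {set V}) : subg A -> (#|homs A| <= #|A|)%N.
Proof.
move=> hA.
have gen k : forall M : {set V}, subg M -> M \subset A -> (#|A| - #|M| < k)%N ->
    (#|homs A| * #|M| <= #|A| * #|homs M|)%N.
  elim: k => [//|k IH] M hM sMA hk.
  case: (boolP (A \subset M)) => [sAM|].
    have -> : M = A by apply/eqP; rewrite eqEsubset sMA sAM.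
    by rewrite mulnC.
  case/subsetPn => g gA gM.
  have [mpos gm mmin] := m0P g hM.
  have sEA : ext M g \subset A.
    apply/subsetP => x /extP[u [j [hu ->]]].
    by apply: subgD => //; [exact: (subsetP sMA) | exact: subgMn].
  have m1 : (1 < m0 M g)%N.
    rewrite ltn_neqAle mpos andbT; apply/eqP => e1.
    by move: gm; rewrite -e1 mulr1n (negbTE gM).
  have cM : (0 < #|M|)%N by apply/card_gt0P; exists 0; case: hM.
  have lt : (#|M| < #|ext M g|)%N by rewrite card_ext // -[X in (X < _)%N]mul1n ltn_mul2r m1 cM.
  have hk2 : (#|A| - #|ext M g| < k)%N.
    move: (subset_leq_card sEA) hk lt; set a := #|A|; set b := #|ext M g|; set c := #|M|; lia.
  have h1 := IH _ (ext_subg g hM) sEA hk2.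
  rewrite card_ext // in h1.
  rewrite -(leq_pmul2l mpos) mulnCA; apply: leq_trans h1 _.
  by rewrite mulnCA leq_mul2l step // orbT.
have h0 : subg [set (0%R : V)].
  by split; rewrite ?inE // => a b; rewrite !inE => /eqP -> /eqP ->; rewrite subrr.
have s0A : [set (0%R : V)] \subset A by rewrite sub1set; case: hA.
have hlt : (#|A| - #|[set (0%R : V)]| < #|A|.+1)%N by rewrite ltnS leq_subr.
have hg := gen #|A|.+1 [set (0%R : V)] h0 s0A hlt.
rewrite cards1 muln1 in hg.
have c1 : (#|homs [set (0%R : V)]| <= 1)%N.
  apply: (@leq_trans #|[set ([ffun => 0] : {ffun V -> 'Z_n})]|); last by rewrite cards1.
  apply/subset_leq_card/subsetP => f hf; rewrite inE; apply/eqP/ffunP => x; rewrite ffunE.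
  case: (eqVneq x 0) => [->|nx]; first by rewrite (homs0 (S := [set (0%R : V)])) // inE.
  by case/homsP: hf => -> //; rewrite inE.
move: hg c1; set a := #|A|; set h := #|homs A|; set h0' := #|homs [set (0%R : V)]|; nia.
Qed.
End Homs.

Section Forms.
Variables (V : finZmodType) (n : nat) (w : V -> V -> 'Z_n).
Hypothesis bi : biadditive w.

Lemma wl a : {morph w^~ a : x y / x + y}. Proof. by case: bi. Qed.
Lemma wr a : {morph w a : x y / x + y}. Proof. by case: bi. Qed.
Lemma wl0 a : w 0 a = 0. Proof. exact: (ad0 (wl a)). Qed.
Lemma wr0 a : w a 0 = 0. Proof. exact: (ad0 (wr a)). Qed.
Lemma wlB a x y : w (x - y) a = w x a - w y a. Proof. exact: (adB (wl a)). Qed.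
Lemma wlMn a x k : w (x *+ k) a = w x a *+ k. Proof. exact: (adMn (wl a)). Qed.
Lemma wrMn a x k : w a (x *+ k) = w a x *+ k. Proof. exact: (adMn (wr a)). Qed.

Lemma skew : alternating w -> forall a b, w a b = - w b a.
Proof.
move=> alt a b; apply/eqP; rewrite -subr_eq0 opprK.
have := alt (a + b); rewrite wl !wr !alt add0r addr0 => ->; exact: eqxx.
Qed.

Definition iso (S : {set V}) := forall a b, a \in S -> b \in S -> w a b = 0.

Lemma iso_ext (M : {set V}) g : subg M -> iso M -> w g g = 0 ->
  (forall m, m \in M -> w m g = 0 /\ w g m = 0) -> iso (ext M g).
Proof.
move=> hM hiso hgg hmg a b /extP[u [j [hu ->]]] /extP[u' [j' [hu' ->]]].
rewrite wl !wr !wlMn !wrMn hgg (hiso u u' hu hu').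
by case: (hmg u hu) => -> _; case: (hmg u' hu') => _ ->; rewrite !mul0rn !addr0.
Qed.

Lemma full (A : {set V}) : subg A ->
  (forall x, (forall a, a \in A -> w x a = 0) -> x = 0) -> A = setT.
Proof.
move=> hA hperp.
pose phi (x : V) : {ffun V -> 'Z_n} := [ffun y => if y \in A then w x y else 0].
have inj : injective phi.
  move=> x1 x2 e; apply/eqP; rewrite -subr_eq0; apply/eqP; apply: hperp => a ha.
  have := congr1 (fun h : {ffun V -> 'Z_n} => h a) e; rewrite !ffunE ha => e'.
  by rewrite wlB e' subrr.
have sub : phi @: setT \subset homs n A.
  apply/subsetP => _ /imsetP[x _ ->]; apply/homsP; split=> [y hy|a b ha hb].
    by rewrite ffunE (negbTE hy).
  by rewrite !ffunE ha hb (subgD hA ha hb) wr.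
have c1 := subset_leq_card sub; rewrite card_imset // in c1.
have c2 := leq_trans c1 (homs_card n hA).
apply/eqP; rewrite eqEcard subsetT /=.
move: c2; rewrite cardsT; set a := #|A|; set b := #|V|; done.
Qed.
End Forms.


Definition pairT (X Y : finZmodType) := (X * Y)%type.
HB.instance Definition _ (X Y : finZmodType) := GRing.Zmodule.copy (pairT X Y) (X * Y)%type.
HB.instance Definition _ (X Y : finZmodType) := Finite.copy (pairT X Y) (X * Y)%type.

Section Main.
Variables (n : nat) (X Y : finZmodType) (wX : X -> X -> 'Z_n) (wY : Y -> Y -> 'Z_n).
Hypotheses (hX : symplectic wX) (hY : symplectic wY) (hT : same_type X Y).

Lemma cardXY : #|X| = #|Y|.
Proof. by case: hT => h [_ hb]; exact: bij_eq_card hb. Qed.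

Lemma anti_bij f : antisymplectic wX wY f -> bijective f.
Proof.
case=> af hf; apply: inj_card_bij; last by rewrite cardXY.
case: hX => biX _ ndX; case: hY => biY _ _.
move=> x x' e; apply/eqP; rewrite -subr_eq0; apply/eqP; apply: ndX => y.
by rewrite hf (adB af) e subrr (wl0 biY) oppr0.
Qed.

Lemma sum_bi : biadditive (sum_form wX wY).
Proof.
case: hX => biX _ _; case: hY => biY _ _.
split=> x a b; rewrite /sum_form /=.
  by rewrite (wr biX) (wr biY) addrACA.
by rewrite (wl biX) (wl biY) addrACA.
Qed.

Lemma graphP (f : X -> Y) x y : ((x, y) \in graph f) = (y == f x).
Proof.
apply/imsetP/eqP => [[x' _ e]|->]; last by exists x.
by case: e => -> ->.
Qed.

Lemma graph_trans f : antisymplectic wX wY f -> transversal_lagrangian wX wY (graph f).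
Proof.
move=> [af hf]; have [g fg gf] := anti_bij (conj af hf).
have finj := can_inj fg.
have f0 := ad0 af.
case: hX => biX _ _; case: hY => biY _ ndY.
have g0 : (0 : X * Y) \in graph f by rewrite -[0]/(0 : X, 0 : Y) graphP f0.
split.
- split.
  + split=> // a b /imsetP[x _ ->] /imsetP[x' _ ->].
    by rewrite -[_ - _]/(x - x', f x - f x') graphP (adB af).
  + move=> a b /imsetP[x _ ->] /imsetP[x' _ ->].
    by rewrite /sum_form /= hf addNr.
  + move=> Z' hZ' hiso' sub; apply/eqP; rewrite eqEsubset sub andbT.
    apply/subsetP => -[a b] hab.
    have hfa : (a, f a) \in Z' by apply: (subsetP sub); rewrite graphP.
    have hv : (a, b) - (a, f a) \in Z' by case: hZ' => _; apply.
    rewrite graphP -subr_eq0; apply/eqP; apply: ndY => y.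
    have hy : (g y, y) \in Z' by apply: (subsetP sub); rewrite graphP gf.
    have := hiso' _ _ hv hy; rewrite /sum_form /= subrr (wl0 biX) add0r.
    done.
- apply/eqP; rewrite eqEsubset; apply/andP; split; apply/subsetP => u.
    rewrite inE => /andP[/imsetP[x _ ->]]; rewrite inE => /eqP fx0.
    have x0 : x = 0 by apply: finj; rewrite f0; exact: fx0.
    by rewrite inE x0 f0; exact: eqxx.
  rewrite inE => /eqP ->; rewrite inE g0 inE; exact: eqxx.
- apply/eqP; rewrite eqEsubset; apply/andP; split; apply/subsetP => u.
    rewrite inE => /andP[/imsetP[x _ ->]]; rewrite inE => /eqP x0.
    by rewrite inE [x]x0 f0; exact: eqxx.
  rewrite inE => /eqP ->; rewrite inE g0 inE; exact: eqxx.
Qed.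

Lemma trans_graph Z : transversal_lagrangian wX wY Z ->
  exists f, antisymplectic wX wY f /\ Z = graph f.
Proof.
case=> [[hsub hiso hmax] hL hR].
case: hX => biX altX ndX; case: hY => biY altY ndY.
have hsub' : @subg (pairT X Y) Z := hsub.
set A := [set u.1 | u in Z].
have hA : subg A.
  split; first by apply/imsetP; exists 0; first by case: hsub.
  move=> _ _ /imsetP[u hu ->] /imsetP[v hv ->]; apply/imsetP; exists (u - v) => //.
  by case: hsub => _; apply.
have hperp x : (forall a, a \in A -> wX x a = 0) -> x = 0.
  move=> hx; pose g : pairT X Y := (x, 0).
  pose Zp : {set pairT X Y} := Z.
  have hZp : subg Zp := hsub.
  have hiso2 : @iso (pairT X Y) n (sum_form wX wY) (ext Zp g).
    have sb : @biadditive (pairT X Y) n (sum_form wX wY) := sum_bi.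
    apply: (iso_ext sb) => //.
      by rewrite /sum_form /= altX (wl0 biY) addr0.
    move=> m hm; have hm1 : wX x m.1 = 0 by apply: hx; apply/imsetP; exists m.
    rewrite /sum_form /= (wr0 biY) (wl0 biY) !addr0 hm1 (skew biX altX) hm1 oppr0.
    by split.
  have e := hmax _ (ext_subg g hZp) hiso2 (subext g hZp).
  have gZ : g \in Z by rewrite -e; apply: gext.
  have : g \in Z :&: left_summand X Y by rewrite inE gZ inE; exact: eqxx.
  rewrite hL inE => /eqP e0; exact: (congr1 fst e0).
have AT : A = setT := full biX hA hperp.
have ex x : exists y, (x, y) \in Z.
  have : x \in A by rewrite AT inE.
  by case/imsetP => -[a b] hu ->; exists b.
have uniq x y y' : (x, y) \in Z -> (x, y') \in Z -> y = y'.
  move=> h1 h2; have : (x, y) - (x, y') \in Z :&: right_summand X Y.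
    rewrite inE; apply/andP; split; first by case: hsub => _; apply.
    rewrite inE; apply/eqP; exact: subrr.
  rewrite hR inE => /eqP e; have := congr1 snd e.
  change (y - y' = 0 -> y = y'); move/eqP; rewrite subr_eq0; exact: eqP.
pose f x := odflt 0 [pick y | (x, y) \in Z].
have fP x : (x, f x) \in Z.
  rewrite /f; case: pickP => [y hy|H]; first exact: hy.
  by case: (ex x) => y hy; move: (H y); rewrite hy.
exists f; split.
  split.
    move=> a b; apply: (uniq (a + b)); first exact: fP.
    exact: (subgD hsub' (fP a) (fP b)).
  move=> a b; have := hiso _ _ (fP a) (fP b); rewrite /sum_form => /eqP.
  by rewrite addr_eq0 => /eqP.
apply/setP => -[a b]; rewrite graphP; apply/idP/eqP => [h|->]; last exact: fP.
exact: uniq h (fP a).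
Qed.

Lemma inv_add (A B : zmodType) (f : A -> B) g : additive_map f -> cancel f g -> cancel g f ->
  additive_map g.
Proof. by move=> af fg gf u v; apply: (can_inj fg); rewrite af !gf. Qed.

Lemma main_sec :
  (forall Z : {set X * Y},
     (exists f : X -> Y, antisymplectic wX wY f /\ Z = graph f) <->
     transversal_lagrangian wX wY Z) /\
  (forall Z1 Z2 : {set X * Y},
     transversal_lagrangian wX wY Z1 -> transversal_lagrangian wX wY Z2 ->
     (exists s : X -> X, in_Sp wX s /\
        [set (s u.1, u.2) | u in Z1] = Z2) /\
     (exists t : Y -> Y, in_Sp wY t /\
        [set (u.1, t u.2) | u in Z1] = Z2)).
Proof.
split.
  move=> Z; split => [[f [af ->]]|]; [exact: graph_trans | exact: trans_graph].
move=> Z1 Z2 h1 h2.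
case: (trans_graph h1) => f1 [a1 ->]; case: (trans_graph h2) => f2 [a2 ->].
have [g1 fg1 gf1] := anti_bij a1; have [g2 fg2 gf2] := anti_bij a2.
case: a1 => af1 hf1; case: a2 => af2 hf2.
have ag1 := inv_add af1 fg1 gf1; have ag2 := inv_add af2 fg2 gf2.
split.
- exists (g2 \o f1); split.
    split.
    + by move=> a b /=; rewrite af1 ag2.
    + by apply: bij_comp; [exists f2 | exists g1].
    + by move=> x y /=; rewrite hf2 !gf2 hf1.
  apply/eqP; rewrite eqEsubset; apply/andP; split; apply/subsetP => v.
    case/imsetP => u /imsetP[x _ ->] ->.
    rewrite graphP; change (f1 x == f2 (g2 (f1 x))); rewrite gf2; exact: eqxx.
  case/imsetP => x _ ->; apply/imsetP; exists (g1 (f2 x), f2 x).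
    rewrite graphP gf1; exact: eqxx.
  by rewrite /= gf1 fg2.
- exists (f2 \o g1); split.
    split.
    + by move=> a b /=; rewrite ag1 af2.
    + by apply: bij_comp; [exists g2 | exists f1].
    + by move=> x y /=; rewrite -[LHS]opprK -hf2 hf1 opprK !gf1.
  apply/eqP; rewrite eqEsubset; apply/andP; split; apply/subsetP => v.
    case/imsetP => u /imsetP[x _ ->] ->.
    change ((x, f2 (g1 (f1 x))) \in graph f2); rewrite fg1 graphP; exact: eqxx.
  case/imsetP => x _ ->; apply/imsetP; exists (x, f1 x).
    rewrite graphP; exact: eqxx.
  by rewrite /= fg1.
Qed.
End Main.

Theorem mainTheorem3 (n : nat) (X Y : finZmodType)
  (wX : X -> X -> 'Z_n) (wY : Y -> Y -> 'Z_n) :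
  symplectic wX -> symplectic wY -> same_type X Y ->
  (forall Z : {set X * Y},
     (exists f : X -> Y, antisymplectic wX wY f /\ Z = graph f) <->
     transversal_lagrangian wX wY Z) /\
  (forall Z1 Z2 : {set X * Y},
     transversal_lagrangian wX wY Z1 -> transversal_lagrangian wX wY Z2 ->
     (exists s : X -> X, in_Sp wX s /\
        [set (s u.1, u.2) | u in Z1] = Z2) /\
     (exists t : Y -> Y, in_Sp wY t /\
        [set (u.1, t u.2) | u in Z1] = Z2)).
Proof. by move=> hX hY hT; exact: (main_sec hX hY hT). Qed.
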